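(* Fix $\eta\in\mathcal H_Q$ and an object $(W,\{\alpha_{i,\hbar}(z)\}_{i\in I},\{e^\pm_{i,\hbar}(z)\}_{i\in I})$ of $\mathcal A_\hbar^\eta(Q)$. Let $\varphi(\cdot,z):\mathfrak h\to\mathcal E_\hbar(W)$ be the unique linear map with $\varphi(\alpha_i,z)+\Phi(\eta'(\alpha_i,z),\varphi)=\alpha_{i,\hbar}(z)$ for all $i\in I$. Then for all $i,j\in I$: $$[\varphi(\alpha_i,z_1),\alpha_{j,\hbar}(z_2)]=\langle\alpha_i,\alpha_j\rangle\tfrac{\partial}{\partial z_2}z_1^{-1}\delta\big(\tfrac{z_2}{z_1}\big)+\langle\eta''(\alpha_j,z_2-z_1),\alpha_i\rangle,$$ $$[\varphi(\alpha_i,z_1),e^\pm_{j,\hbar}(z_2)]=\pm\langle\alpha_i,\alpha_j\rangle e^\pm_{j,\hbar}(z_2)z_1^{-1}\delta\big(\tfrac{z_2}{z_1}\big)\pm\langle\eta'(\alpha_j,z_2-z_1),\alpha_i\rangle e^\pm_{j,\hbar}(z_2),$$ $$[\varphi(\alpha_i,z_1),\varphi(\alpha_j,z_2)]=\langle\alpha_i,\alpha_j\rangle\tfrac{\partial}{\partial z_2}z_1^{-1}\delta\big(\tfrac{z_2}{z_1}\big).$$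
   Context: $\hbar$-adic setting: a $\mathbb{C}[[\hbar]]$-module is topologically free if it equals $W_0[[\hbar]]$; for such $W$, $\mathcal E_\hbar(W)=\mathrm{Hom}_{\mathbb C[[\hbar]]}(W,W_0((z))[[\hbar]])$. $Q=\bigoplus_{i\in I}\mathbb Z\alpha_i$ ($I$ finite) is a non-degenerate even lattice, $\mathfrak h=\mathbb C\otimes_{\mathbb Z}Q$ with form $\langle\cdot,\cdot\rangle$. $\mathcal H_Q$ is the set of linear maps $\eta:\mathfrak h\to\mathfrak h\otimes\mathbb C((z))[[\hbar]]$ with $\eta(\alpha_i,z)|_{\hbar=0}\in\mathfrak h\otimes z\mathbb C[[z]]$ and $\eta(\alpha_i,z)^-\in\mathfrak h\otimes\hbar\mathbb C[z^{-1}][[\hbar]]$ for all $i$ ($g^\pm$ = regular/singular part). $\eta'=\partial_z\eta$, $\eta''=\partial_z^2\eta$; $\langle\cdot,\cdot\rangle$ is extended $\mathbb C((z))[[\hbar]]$-bilinearly. $\Phi(h\otimes f(z),\varphi)=\mathrm{Res}_{z_1}\varphi(h,z_1)f(z-z_1)$ ($f(z-z_1)$ expanded in nonnegative powers of $z_1$), extended linearly; the map $\varphi$ in the claim exists uniquely. Convention: a function of $z_1-z_2$ is expanded in nonnegative powers of $z_2$, one of $z_2-z_1$ in nonnegative powers of $z_1$; $\iota_{z_1,z_2}$ denotes expansion in nonnegative powers of $z_2$. The category $\mathcal A_\hbar^\eta(Q)$: objects are topologically free $\mathbb C[[\hbar]]$-modules $W$ with fields $\alpha_{i,\hbar}(z),e^\pm_{i,\hbar}(z)\in\mathcal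 E_\hbar(W)$ ($i\in I$) such that for all $i,j\in I$: (AQ1) $[\alpha_{i,\hbar}(z_1),\alpha_{j,\hbar}(z_2)]=\langle\alpha_i,\alpha_j\rangle\frac{\partial}{\partial z_2}z_1^{-1}\delta(\frac{z_2}{z_1})-\langle\eta''(\alpha_i,z_1-z_2),\alpha_j\rangle+\langle\eta''(\alpha_j,z_2-z_1),\alpha_i\rangle$; (AQ2) $[\alpha_{i,\hbar}(z_1),e^\pm_{j,\hbar}(z_2)]=\pm\langle\alpha_i,\alpha_j\rangle e^\pm_{j,\hbar}(z_2)z_1^{-1}\delta(\frac{z_2}{z_1})\pm\langle\eta'(\alpha_i,z_1-z_2),\alpha_j\rangle e^\pm_{j,\hbar}(z_2)\pm\langle\eta'(\alpha_j,z_2-z_1),\alpha_i\rangle e^\pm_{j,\hbar}(z_2)$; (AQ3) there is $P_{ij}(z)\in\mathbb C((z))[[\hbar]]$ with $\iota_{z_1,z_2}e^{-\langle\eta(\alpha_i,z_1-z_2),\alpha_j\rangle}P_{ij}(z_1-z_2)e^\pm_{i,\hbar}(z_1)e^\pm_{j,\hbar}(z_2)=\iota_{z_2,z_1}e^{-\langle\eta(\alpha_j,z_2-z_1),\alpha_i\rangle}P_{ij}(z_1-z_2)e^\pm_{j,\hbar}(z_2)e^\pm_{i,\hbar}(z_1)$; (AQ4) there is $Q_{ij}(z)\in\mathbb C((z))[[\hbar]]$ with $\iota_{z_1,z_2}e^{\langle\eta(\alpha_i,z_1-z_2),\alpha_j\rangle}Q_{ij}(z_1-z_2)e^\pm_{i,\hbar}(z_1)e^\mp_{j,\hbar}(z_2)=\iota_{z_2,z_1}e^{\langle\eta(\alpha_j,z_2-z_1),\alpha_i\rangle}Q_{ij}(z_1-z_2)e^\mp_{j,\hbar}(z_2)e^\pm_{i,\hbar}(z_1)$;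 (AQ5) $\frac{d}{dz}e^\pm_{i,\hbar}(z)=\pm\alpha_{i,\hbar}(z)^+e^\pm_{i,\hbar}(z)\pm e^\pm_{i,\hbar}(z)\alpha_{i,\hbar}(z)^--\langle\eta'(\alpha_i,0)^+,\alpha_i\rangle e^\pm_{i,\hbar}(z)$, where $\eta'(\alpha_i,0)^+$ is the regular part evaluated at $z=0$; (AQ6) $\iota_{z_1,z_2}e^{\langle\eta(\alpha_i,z_1-z_2),\alpha_i\rangle}(z_1-z_2)^{\langle\alpha_i,\alpha_i\rangle}e^+_{i,\hbar}(z_1)e^-_{i,\hbar}(z_2)=\iota_{z_2,z_1}e^{\langle\eta(\alpha_i,z_2-z_1),\alpha_i\rangle}(z_1-z_2)^{\langle\alpha_i,\alpha_i\rangle}e^-_{i,\hbar}(z_2)e^+_{i,\hbar}(z_1)$, and $\big(e^{\langle\eta(\alpha_i,z_1-z_2),\alpha_i\rangle}(z_1-z_2)^{\langle\alpha_i,\alpha_i\rangle}e^+_{i,\hbar}(z_1)e^-_{i,\hbar}(z_2)\big)|_{z_1=z_2}=1$. Morphisms are $\mathbb C[[\hbar]]$-linear maps commuting with all the fields. *)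

(* Defs.v *)
From HB Require Import structures.
From mathcomp Require Export all_boot all_order all_algebra.
From mathcomp Require Export complex.
From mathcomp Require Export classical_sets fsbigop Rstruct.
Set Implicit Arguments. Unset Strict Implicit. Unset Printing Implicit Defensive.
Import Order.TTheory GRing.Theory Num.Theory.
Local Open Scope ring_scope.

Definition C : Type := (Rdefinitions.R)[i].

(* Sum over Z of a finitely supported family (0 if the support is infinite;
   all sums below are used only on finitely supported families). *)
Definition zsum {V : nmodType} (f : int -> V) : V :=
  (\sum_(n \in [set: int]) f n)%classic.
Definition zsum2 {V : nmodType} (f : int * int -> V) : V :=
  (\sum_(x \in [set: int * int]) f x)%classic.
Definition nsum {V : nmodType} (f : nat -> V) : V :=
  (\sum_(n \in [set: nat]) f n)%classic.

(* sc1   = series  sum_{p in N, r in Z} c p r hbar^p z^r       (C((z))[[hbar]])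
   sc2   = series  sum_{p, m, n} c p m n hbar^p z1^m z2^n     *)
Definition sc1 := nat -> int -> C.
Definition sc2 := nat -> int -> int -> C.

(* f is in C((z))[[hbar]] : for each hbar-order, a Laurent series *)
Definition laurent1 (f : sc1) : Prop :=
  forall p, exists N : int, forall r, r < N -> f p r = 0.

Definition sone : sc1 := fun p r => if (p == 0%N) && (r == 0) then 1 else 0.
Definition smul (f g : sc1) : sc1 := fun p r =>
  \sum_(q < p.+1) zsum (fun s => f q s * g (p - q)%N (r - s)).
Definition sopp (f : sc1) : sc1 := fun p r => - f p r.
Definition spow (f : sc1) (n : nat) : sc1 := iter n (smul f) sone.
Definition sexp (f : sc1) : sc1 := fun p r =>
  nsum (fun n => spow f n p r / (n`!)%:R).
Definition zpow (a : int) : sc1 := fun p r => if (p == 0%N) && (r == a) then 1 else 0.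
Definition dz (f : sc1) : sc1 := fun p r => (r + 1)%:~R * f p (r + 1).
Definition negz (f : sc1) : sc1 := fun p r => (-1) ^+ `|r|%N * f p r.

Definition gbinom (r : int) (n : nat) : C :=
  (\prod_(i < n) (r - (i : nat)%:Z)%:~R) / (n`!)%:R.

(* f(z1 - z2) expanded in nonnegative powers of z2  (= iota_{z1,z2}) *)
Definition iota12 (f : sc1) : sc2 := fun p m n =>
  if 0 <= n then f p (m + n) * gbinom (m + n) `|n|%N * (-1) ^+ `|n|%N else 0.
(* f(z2 - z1) expanded in nonnegative powers of z1  (= iota_{z2,z1}) *)
Definition iota21 (f : sc1) : sc2 := fun p m n =>
  if 0 <= m then f p (m + n) * gbinom (m + n) `|m|%N * (-1) ^+ `|m|%N else 0.

(* z1^{-1} delta(z2/z1) = sum_n z1^{-n-1} z2^n *)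
Definition delta2 : sc2 := fun p m n =>
  if (p == 0%N) && (m == - n - 1) then 1 else 0.
(* d/dz2 (z1^{-1} delta(z2/z1)) = sum_n n z1^{-n-1} z2^{n-1} *)
Definition ddelta2 : sc2 := fun p m n =>
  if (p == 0%N) && (m == - n - 2) then (n + 1)%:~R else 0.

(* Q = (+)_{i in I} Z alpha_i with Gram matrix A i j = <alpha_i, alpha_j>. *)
Definition sym_gram (I : finType) (A : I -> I -> int) : Prop :=
  forall i j, A i j = A j i.
Definition gram_even (I : finType) (A : I -> I -> int) : Prop :=
  forall c : I -> int, (2 %| \sum_i \sum_j c i * A i j * c j)%Z.
Definition gram_nondeg (I : finType) (A : I -> I -> int) : Prop :=
  forall c : I -> int, (forall j, \sum_i c i * A i j = 0) -> forall i, c i = 0.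

(* Elements of h = C (x) Q are coordinate vectors v : I -> C (v = sum v_k alpha_k).
   <v, alpha_j> : *)
Definition pair_al (I : finType) (A : I -> I -> int) (v : I -> C) (j : I) : C :=
  \sum_k v k * (A k j)%:~R.

(* A linear map eta : h -> h (x) C((z))[[hbar]] is given by its values on the
   basis:  eta(alpha_i, z) = sum_{p,r} hbar^p z^r (sum_k eta i p r k alpha_k). *)
Definition in_HQ (I : finType) (eta : I -> nat -> int -> I -> C) : Prop :=
  forall i,
    (forall p, exists N : int, forall r, r < N -> eta i p r = (fun=> 0)) /\
    (* eta(alpha_i,z)|_{hbar=0} in h (x) z C[[z]] *)
    (forall r, r <= 0 -> eta i 0%N r = (fun=> 0)) /\
    (* eta(alpha_i,z)^- in h (x) hbar C[z^-1][[hbar]] *)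
    (forall r, r < 0 -> eta i 0%N r = (fun=> 0)).

(* <eta(alpha_i, z), alpha_j> in C((z))[[hbar]] *)
Definition etaij (I : finType) (A : I -> I -> int) (eta : I -> nat -> int -> I -> C)
  (i j : I) : sc1 := fun p r => pair_al A (eta i p r) j.
Definition etak (I : finType) (eta : I -> nat -> int -> I -> C) (i k : I) : sc1 :=
  fun p r => eta i p r k.

Section Fields.
Variable W0 : lmodType C.

(* W = W0[[hbar]] : w = sum_k w k hbar^k *)
Definition hW := nat -> W0.
(* field a(z) : W -> W0((z))[[hbar]],  (a w) k n = coefficient of hbar^k z^n *)
Definition fieldT := hW -> nat -> int -> W0.
(* two-variable operator W -> W0[[z1^{+-1}, z2^{+-1}]][[hbar]] *)
Definition op2 := hW -> nat -> int -> int -> W0.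

Definition hact (c : nat -> C) (w : hW) : hW := fun k =>
  \sum_(p < k.+1) c p *: w (k - p)%N.
Definition hact1 (c : nat -> C) (x : nat -> int -> W0) : nat -> int -> W0 :=
  fun k n => \sum_(p < k.+1) c p *: x (k - p)%N n.

(* a is an element of E_hbar(W) = Hom_{C[[hbar]]}(W, W0((z))[[hbar]]) *)
Definition is_field (a : fieldT) : Prop :=
  (forall u v k n, a (fun t => u t + v t) k n = a u k n + a v k n) /\
  (forall c u k n, a (hact c u) k n = hact1 c (a u) k n) /\
  (forall w k, exists N : int, forall n, n < N -> a w k n = 0).

Definition fid : fieldT := fun w k n => if n == 0 then w k else 0.

(* a(z1) b(z2) *)
Definition fprod (a b : fieldT) : op2 := fun w K m n => a (fun k => b w k n) K m.
(* b(z2) a(z1) *)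
Definition fprod_rev (a b : fieldT) : op2 := fun w K m n => b (fun k => a w k m) K n.
Definition fcomm (a b : fieldT) : op2 := fun w K m n =>
  fprod a b w K m n - fprod_rev a b w K m n.

(* s(z1,z2) * 1 *)
Definition sc2id (s : sc2) : op2 := fun w K m n =>
  \sum_(p < K.+1) s p m n *: w (K - p)%N.
(* s(z1,z2) * b(z2) *)
Definition sc2f2 (s : sc2) (b : fieldT) : op2 := fun w K m n =>
  \sum_(p < K.+1) zsum (fun n' => s p m (n - n') *: b w (K - p)%N n').
(* s(z1,z2) * a(z1) b(z2) *)
Definition sc2ff (s : sc2) (a b : fieldT) : op2 := fun w K m n =>
  \sum_(p < K.+1) zsum2 (fun x => s p x.1 x.2 *: fprod a b w (K - p)%N (m - x.1) (n - x.2)).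
(* s(z1,z2) * b(z2) a(z1) *)
Definition sc2ff_rev (s : sc2) (a b : fieldT) : op2 := fun w K m n =>
  \sum_(p < K.+1) zsum2 (fun x => s p x.1 x.2 *: fprod_rev a b w (K - p)%N (m - x.1) (n - x.2)).
(* restriction z1 = z2 = z *)
Definition diag2 (X : op2) : fieldT := fun w K n => zsum (fun m => X w K m (n - m)).

Definition fprod1 (a b : fieldT) : fieldT := fun w K n =>
  zsum (fun n' => a (fun k => b w k n') K (n - n')).
Definition fplus (a : fieldT) : fieldT := fun w k n => if 0 <= n then a w k n else 0.
Definition fminus (a : fieldT) : fieldT := fun w k n => if n < 0 then a w k n else 0.
Definition fder (a : fieldT) : fieldT := fun w k n => (n + 1)%:~R *: a w k (n + 1).

(* Phi(alpha_k (x) g(z), phi) = Res_{z1} phi(alpha_k, z1) g(z - z1) *)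
Definition PhiT (g : sc1) (a : fieldT) : fieldT := fun w K n =>
  \sum_(s < K.+1) zsum (fun t => iota12 g s n (- t - 1) *: a w (K - s)%N t).

End Fields.

Definition sgn (b : bool) : C := if b then 1 else -1.

(* e true i = e^+_{i,hbar},  e false i = e^-_{i,hbar}. *)
Definition is_object (I : finType) (A : I -> I -> int)
  (eta : I -> nat -> int -> I -> C) (W0 : lmodType C)
  (alpha : I -> fieldT W0) (e : bool -> I -> fieldT W0) : Prop :=
  (forall i, is_field (alpha i)) /\
  (forall b i, is_field (e b i)) /\
  (forall i j, fcomm (alpha i) (alpha j) =
     sc2id (fun p m n => (A i j)%:~R * ddelta2 p m n
                         - iota12 (dz (dz (etaij A eta i j))) p m n
                         + iota21 (dz (dz (etaij A eta j i))) p m n)) /\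
  (forall b i j, fcomm (alpha i) (e b j) =
     sc2f2 (fun p m n => sgn b * ((A i j)%:~R * delta2 p m n
                         + iota12 (dz (etaij A eta i j)) p m n
                         + iota21 (dz (etaij A eta j i)) p m n)) (e b j)) /\
  (forall i j, exists P : sc1, laurent1 P /\ forall b,
     sc2ff (iota12 (smul (sexp (sopp (etaij A eta i j))) P)) (e b i) (e b j) =
     sc2ff_rev (iota21 (smul (sexp (sopp (etaij A eta j i))) (negz P))) (e b i) (e b j)) /\
  (forall i j, exists Q : sc1, laurent1 Q /\ forall b,
     sc2ff (iota12 (smul (sexp (etaij A eta i j)) Q)) (e b i) (e (~~ b) j) =
     sc2ff_rev (iota21 (smul (sexp (etaij A eta j i)) (negz Q))) (e b i) (e (~~ b) j)) /\
  (forall b i w k n, fder (e b i) w k n =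
     sgn b *: fprod1 (fplus (alpha i)) (e b i) w k n
     + sgn b *: fprod1 (e b i) (fminus (alpha i)) w k n
     - hact1 (fun p => dz (etaij A eta i i) p 0) (e b i w) k n) /\
  (forall i,
     sc2ff (iota12 (smul (sexp (etaij A eta i i)) (zpow (A i i)))) (e true i) (e false i) =
     sc2ff_rev (iota21 (smul (sexp (etaij A eta i i)) (negz (zpow (A i i)))))
               (e true i) (e false i) /\
     diag2 (sc2ff (iota12 (smul (sexp (etaij A eta i i)) (zpow (A i i))))
                  (e true i) (e false i)) = @fid W0).

(* Main.v *)
Require Import Defs.
From mathcomp Require Import zify ring lra.
Import Order.TTheory GRing.Theory Num.Theory.
Local Open Scope ring_scope.

Lemma zsum_range {V : nmodType} (lo : int) (n : nat) (f : int -> V) :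
  (forall t, f t != 0 -> lo <= t < lo + n%:Z) ->
  zsum f = \sum_(k < n) f (lo + k%:Z).
Proof.
move=> hf; rewrite /zsum (fsbigE [seq lo + k%:Z | k <- iota 0 n]) //=.
- rewrite big_map big_mkcond /=.
  rewrite -(big_mkord xpredT (fun k => f (lo + k%:Z))) /index_iota subn0.
  by apply: eq_bigr => k _; rewrite classical_sets.mem_setT.
- by rewrite map_inj_uniq ?iota_uniq // => a b /= /addrI [].
- move=> i _ Hi; apply/eqP; apply: contraNT Hi => /hf /andP[h1 h2].
  apply/mapP; exists `|i - lo|%N.
  + rewrite mem_iota add0n /=. lia.
  + lia.
Qed.

Definition bdd {V : nmodType} (f : int -> V) (N M : int) :=
  forall t, t < N \/ M <= t -> f t = 0.

Lemma zsum_bdd {V : nmodType} (f : int -> V) N M : bdd f N M ->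
  zsum f = \sum_(k < `|M - N|) f (N + k%:Z).
Proof.
move=> hb; apply: zsum_range => t ht.
case: (boolP (N <= t)) => h1; case: (boolP (t < N + `|M - N|%N%:Z)) => h2 //.
- by case/eqP: ht; apply: hb; right; lia.
- by case/eqP: ht; apply: hb; left; lia.
- by case/eqP: ht; apply: hb; left; lia.
Qed.

Arguments zsum_bdd {V f N M}.

Lemma bdd_widen {V : nmodType} (f : int -> V) N M N' M' :
  N' <= N -> M <= M' -> bdd f N M -> bdd f N' M'.
Proof. by move=> h1 h2 hb t [h|h]; apply: hb; [left|right]; lia. Qed.

Lemma zsum0 {V : nmodType} (f : int -> V) : (forall t, f t = 0) -> zsum f = 0.
Proof.
move=> h; rewrite (@zsum_bdd _ f 0 0 _) ?big_ord0 // => t _; exact: h.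
Qed.

Lemma zsum_ext {V : nmodType} (f g : int -> V) : (forall t, f t = g t) -> zsum f = zsum g.
Proof. by move=> h; congr zsum; apply: boolp.funext. Qed.

Lemma zsum1 {V : nmodType} (f : int -> V) (t0 : int) : (forall t, t != t0 -> f t = 0) -> zsum f = f t0.
Proof.
move=> h; rewrite (@zsum_bdd _ f t0 (t0 + 1)%R _).
- have -> : `|(t0 + 1 - t0)%R|%N = 1%N by lia.
  by rewrite big_ord1 addr0.
- move=> t ht; apply: h; apply/eqP; lia.
Qed.

Lemma zsumD {V : nmodType} (f g : int -> V) N M : bdd f N M -> bdd g N M ->
  zsum (fun t => f t + g t) = zsum f + zsum g.
Proof.
move=> hf hg; rewrite (zsum_bdd hf) (zsum_bdd hg) (@zsum_bdd _ _ N M _) ?big_split //.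
by move=> t ht; rewrite (hf t ht) (hg t ht) addr0.
Qed.

Lemma zsumB {V : zmodType} (f g : int -> V) N M : bdd f N M -> bdd g N M ->
  zsum (fun t => f t - g t) = zsum f - zsum g.
Proof.
move=> hf hg; rewrite (zsum_bdd hf) (zsum_bdd hg) (@zsum_bdd _ _ N M _) ?sumrB //.
by move=> t ht; rewrite (hf t ht) (hg t ht) subr0.
Qed.

Lemma zsum_big {V : nmodType} (J : Type) (r : seq J) (F : J -> int -> V) N M :
  (forall k, bdd (F k) N M) ->
  zsum (fun t => \sum_(k <- r) F k t) = \sum_(k <- r) zsum (F k).
Proof.
move=> hF; rewrite (@zsum_bdd _ _ N M _).
- rewrite exchange_big /=; apply: eq_bigr => k _; by rewrite (zsum_bdd (hF k)).
- by move=> t ht; rewrite big1 // => k _; apply: hF.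
Qed.

Lemma zsumZ {V : lmodType C} (c : C) (f : int -> V) N M : bdd f N M ->
  zsum (fun t => c *: f t) = c *: zsum f.
Proof.
move=> hf; rewrite (zsum_bdd hf) (@zsum_bdd _ _ N M _) ?scaler_sumr //.
by move=> t ht; rewrite (hf t ht) scaler0.
Qed.

Lemma zsum_shift {V : nmodType} (H : int -> V) c N M : bdd H N M ->
  zsum (fun t => H (t + c)) = zsum H.
Proof.
move=> hb; rewrite (zsum_bdd hb) (@zsum_bdd _ _ (N - c) (M - c) _).
- have -> : `|(M - c - (N - c))%R|%N = `|(M - N)%R|%N by lia.
  by apply: eq_bigr => k _; rewrite addrAC subrK.
- by move=> t [ht|ht]; apply: hb; [left|right]; lia.
Qed.


Lemma field_add {W0 : lmodType C} {a : fieldT W0} : is_field a ->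
  forall u v K n, a (fun t => u t + v t) K n = a u K n + a v K n.
Proof. by case. Qed.

Lemma field_hact {W0 : lmodType C} {a : fieldT W0} : is_field a ->
  forall c u K n, a (hact c u) K n = hact1 c (a u) K n.
Proof. by case=> _ []. Qed.

Lemma field0 {W0 : lmodType C} {a : fieldT W0} : is_field a ->
  forall K n, a (fun _ => 0) K n = 0.
Proof.
move=> ha K n; have := field_add ha (fun _ => 0) (fun _ => 0) K n.
have -> : (fun _ : nat => (0 : W0) + 0) = (fun _ => 0) by apply: boolp.funext => t; rewrite addr0.
by move=> h; apply: (@addrI _ (a (fun=> 0) K n)); rewrite -h addr0.
Qed.

Lemma field_trunc {W0 : lmodType C} {a : fieldT W0} : is_field a ->
  forall u v K n, (forall k, (k <= K)%N -> u k = v k) -> a u K n = a v K n.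
Proof.
move=> ha u v K n huv.
pose d k := u k - v k.
have -> : u = (fun t => v t + d t) by apply: boolp.funext => t; rewrite /d addrC subrK.
rewrite field_add //.
pose c (p : nat) : C := if p == K.+1 then 1 else 0.
pose d' k := d (k + K.+1)%N.
have -> : d = hact c d'.
  apply: boolp.funext => k; rewrite /hact.
  case: (leqP k K) => hk.
  - rewrite big1 ?/d ?huv ?subrr // => p _; rewrite /c.
    have : (p <= K)%N by rewrite -ltnS; apply: leq_trans (ltn_ord p) _.
    by case: eqP => [->|_]; [rewrite ltnn|rewrite scale0r].
  - have hp : (K.+1 < k.+1)%N by [].
    rewrite (bigD1 (Ordinal hp)) //= big1 ?addr0.
    + by rewrite /c eqxx scale1r /d' subnK.
    + move=> p /eqP hne; rewrite /c; case: eqP => [he|_]; last by rewrite scale0r.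
      by case: hne; apply: val_inj.
rewrite field_hact // /hact1 big1 ?addr0 // => p _; rewrite /c.
by case: eqP => [he|_]; [move: (ltn_ord p); rewrite he ltnn|rewrite scale0r].
Qed.

Lemma field_sum {W0 : lmodType C} {a : fieldT W0} (J : Type) (r : seq J) (F : J -> hW W0) :
  is_field a -> forall K n,
  a (fun k => \sum_(j <- r) F j k) K n = \sum_(j <- r) a (F j) K n.
Proof.
move=> ha K n; elim: r => [|x r IH].
- rewrite big_nil; transitivity (a (fun=> 0) K n); last exact: field0 ha K n.
  by congr a; apply: boolp.funext => k; rewrite big_nil.
- rewrite big_cons -IH -field_add //; congr a; apply: boolp.funext => k; by rewrite big_cons.
Qed.

Lemma unif_bound {W0 : lmodType C} (y : nat -> int -> W0) :
  (forall k, exists N : int, forall t, t < N -> y k t = 0) ->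
  forall K, exists N : int, N <= 0 /\ forall k t, (k <= K)%N -> t < N -> y k t = 0.
Proof.
move=> hy; elim=> [|K [N [hN IH]]].
- have [N hN] := hy 0%N; exists (Num.min N 0); split; first by rewrite ge_min lexx orbT.
  move=> k t; rewrite leqn0 => /eqP -> ht; apply: hN.
  by apply: (lt_le_trans ht); rewrite ge_min lexx.
- have [N' hN'] := hy K.+1; exists (Num.min N (Num.min N' 0)); split.
  + by rewrite !ge_min lexx !orbT.
  + move=> k t; rewrite leq_eqVlt ltnS => /orP[/eqP->|hk] ht.
    * apply: hN'; apply: (lt_le_trans ht); by rewrite !ge_min lexx !orbT.
    * apply: IH => //; apply: (lt_le_trans ht); by rewrite !ge_min lexx.
Qed.

Lemma field_conv {W0 : lmodType C} {f : fieldT W0} (c : nat -> int -> C)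
  (y : nat -> int -> W0) K n :
  is_field f -> (forall s t, 0 <= t -> c s t = 0) ->
  (forall k, exists N : int, forall t, t < N -> y k t = 0) ->
  f (fun k => \sum_(s < k.+1) zsum (fun t => c s t *: y (k - s)%N t)) K n =
  \sum_(s < K.+1) zsum (fun t => c s t *: f (fun k => y k t) (K - s)%N n).
Proof.
move=> hf hc hy; have [N [hN hNy]] := @unif_bound _ y hy K.
rewrite (@field_trunc _ f hf _ (fun k => \sum_(j < `|(0 - N)%R|)
           hact (fun s => c s (N + j%:Z)) (fun k => y k (N + j%:Z)) k)).
- rewrite field_sum //.
  under eq_bigr => j _ do rewrite field_hact // /hact1.
  rewrite exchange_big /=; apply: eq_bigr => s _.
  rewrite (@zsum_bdd _ _ N 0 _) //.
  move=> t [ht|ht].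
  + rewrite (@field_trunc _ f hf _ (fun _ => 0)) ?field0 ?scaler0 // => k hk.
    by apply: hNy => //; apply: leq_trans hk (leq_subr _ _).
  + by rewrite hc // scale0r.
- move=> k hk; rewrite exchange_big /=; apply: eq_bigr => s _.
  rewrite (@zsum_bdd _ _ N 0 _) //.
  + move=> t [ht|ht].
    * rewrite hNy ?scaler0 //; apply: leq_trans (leq_subr _ _) hk.
    * by rewrite hc // scale0r.
Qed.


Lemma gbinom_zero (r : int) (n : nat) : 0 <= r -> r < n%:Z -> gbinom r n = 0.
Proof.
move=> h1 h2; rewrite /gbinom.
have hr : (`|r| < n)%N by lia.
rewrite (bigD1 (Ordinal hr)) //= .
have -> : (r - `|r|%N%:Z) = 0 by lia.
by rewrite mul0r mul0r.
Qed.

Lemma gbinom_rec (r : int) (n : nat) :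
  (n.+1)%:R * gbinom (r + 1) n.+1 = (r + 1)%:~R * gbinom r n.
Proof.
rewrite /gbinom big_ord_recl /=.
have -> : \prod_(i < n) ((r + 1 - (bump 0 i)%:Z)%:~R : C) = \prod_(i < n) (r - i%:Z)%:~R.
  by apply: eq_bigr => i _; congr intmul; rewrite /bump /=; lia.
have -> : (r + 1 - 0%:Z) = r + 1 by lia.
rewrite factS natrM.
have h1 : (n.+1)%:R != 0 :> C by rewrite pnatr_eq0.
have h2 : (n`!)%:R != 0 :> C by rewrite pnatr_eq0 -lt0n fact_gt0.
rewrite invfM; field.
by rewrite h2 addrC natr1 h1.
Qed.

Definition PhiL {W0 : lmodType C} (g : sc1) (X : op2 W0) : op2 W0 :=
  fun w K m n => \sum_(s < K.+1) zsum (fun t => iota12 g s m (- t - 1) *: X w (K - s)%N t n).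
Definition PhiR {W0 : lmodType C} (g : sc1) (X : op2 W0) : op2 W0 :=
  fun w K m n => \sum_(s < K.+1) zsum (fun t => iota12 g s n (- t - 1) *: X w (K - s)%N m t).

Lemma iota12_low (g : sc1) (m t : int) : (forall r, r < 0 -> g 0%N r = 0) ->
  iota12 g 0 m (- t - 1) != 0 -> 0 <= m /\ t < 0.
Proof.
move=> hg; rewrite /iota12; case: ifP => h; last by rewrite eqxx.
case: (ltP (m + (- t - 1)) 0) => hr; first by rewrite hg // !mul0r eqxx.
case: (ltP (m + (- t - 1)) (`|(- t - 1)%R|%N)%:Z) => hb.
  by rewrite gbinom_zero // mulr0 mul0r eqxx.
move=> _; split; lia.
Qed.

Arguments iota12_low {g m t}.

Lemma uniqL {W0 : lmodType C} (I : finType) (G : I -> I -> sc1)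
  (hG : forall i k r, r < 0 -> G i k 0%N r = 0) (X Y : I -> op2 W0) :
  (forall i w K m n, X i w K m n + \sum_k PhiL (G i k) (X k) w K m n =
                     Y i w K m n + \sum_k PhiL (G i k) (Y k) w K m n) ->
  forall i, X i = Y i.
Proof.
move=> h.
suff H : forall w K i m n, X i w K m n = Y i w K m n.
  move=> i; apply: boolp.funext => w; apply: boolp.funext => K.
  apply: boolp.funext => m; apply: boolp.funext => n; exact: H.
move=> w K; elim/ltn_ind: K => K IH.
pose T0 (Z : I -> op2 W0) i k m n :=
  zsum (fun t => iota12 (G i k) 0 m (- t - 1) *: Z k w K t n).
have h0 : forall i m n, X i w K m n + \sum_k T0 X i k m n = Y i w K m n + \sum_k T0 Y i k m n.
  move=> i m n; have := h i w K m n; rewrite /PhiL.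
  under eq_bigr => k _ do rewrite big_ord_recl.
  under [in RHS]eq_bigr => k _ do rewrite big_ord_recl.
  rewrite !big_split /=.
  have -> : \sum_k \sum_(i0 < K) zsum (fun t => iota12 (G i k) (bump 0 i0) m (- t - 1) *:
                     X k w (K - bump 0 i0)%N t n) =
            \sum_k \sum_(i0 < K) zsum (fun t => iota12 (G i k) (bump 0 i0) m (- t - 1) *:
                     Y k w (K - bump 0 i0)%N t n).
    apply: eq_bigr => k _; apply: eq_bigr => s _; apply: zsum_ext => t.
    by rewrite IH // /bump /= subnS prednK ?subn_gt0 // ?leq_subr ?ltn_subrL.
  rewrite !subn0 !addrA => /addIr.
  by rewrite /T0.
have hneg : forall i m n, m < 0 -> X i w K m n = Y i w K m n.
  move=> i m n hm; have := h0 i m n.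
  rewrite !big1 ?addr0 // => k _; apply: zsum0 => t;
    (case: (boolP (iota12 (G i k) 0 m (- t - 1) == 0)) => [/eqP -> | hz]; [by rewrite scale0r|];
     have [] := iota12_low (hG i k) hz; lia).
move=> i m n; have := h0 i m n.
have -> : \sum_k T0 X i k m n = \sum_k T0 Y i k m n.
  apply: eq_bigr => k _; apply: zsum_ext => t.
  case: (boolP (iota12 (G i k) 0 m (- t - 1) == 0)) => [/eqP -> | hz]; first by rewrite !scale0r.
  have [_ ht] := iota12_low (hG i k) hz; by rewrite hneg.
by move/addIr.
Qed.

Lemma uniqR {W0 : lmodType C} (I : finType) (G : I -> I -> sc1)
  (hG : forall i k r, r < 0 -> G i k 0%N r = 0) (X Y : I -> op2 W0) :
  (forall i w K m n, X i w K m n + \sum_k PhiR (G i k) (X k) w K m n =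
                     Y i w K m n + \sum_k PhiR (G i k) (Y k) w K m n) ->
  forall i, X i = Y i.
Proof.
move=> h i.
have := @uniqL W0 I G hG (fun k w K m n => X k w K n m) (fun k w K m n => Y k w K n m).
move=> /(_ _ i) H.
have {}H := H (fun j w K m n => h j w K n m).
apply: boolp.funext => w; apply: boolp.funext => K.
apply: boolp.funext => m; apply: boolp.funext => n.
by have := congr1 (fun F => F w K n m) H.
Qed.


Lemma zsumB_coef {W0 : lmodType C} (c : int -> C) (a b : int -> W0) :
  (forall t, 0 <= t -> c t = 0) -> (exists N : int, forall t, t < N -> a t = 0) ->
  (exists N : int, forall t, t < N -> b t = 0) ->
  zsum (fun t => c t *: (a t - b t)) = zsum (fun t => c t *: a t) - zsum (fun t => c t *: b t).
Proof.
move=> hc [Na ha] [Nb hb].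
pose N := Num.min Na Nb.
have hN1 : N <= Na by rewrite ge_min lexx.
have hN2 : N <= Nb by rewrite ge_min lexx orbT.
rewrite -(@zsumB _ _ _ N 0).
- by apply: zsum_ext => t; rewrite scalerBr.
- move=> t [ht|ht]; last by rewrite hc // scale0r.
  by rewrite ha ?scaler0 //; apply: lt_le_trans ht hN1.
- move=> t [ht|ht]; last by rewrite hc // scale0r.
  by rewrite hb ?scaler0 //; apply: lt_le_trans ht hN2.
Qed.

Lemma field_bound {W0 : lmodType C} (f : fieldT W0) (y : nat -> int -> W0) K n :
  is_field f -> (forall k, exists N : int, forall t, t < N -> y k t = 0) ->
  exists N : int, forall t, t < N -> f (fun k => y k t) K n = 0.
Proof.
move=> hf hy; have [N [_ hN]] := @unif_bound _ y hy K.
exists N => t ht; rewrite (@field_trunc _ f hf _ (fun _ => 0)) ?field0 // => k hk.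
exact: hN.
Qed.

Lemma field_lowb {W0 : lmodType C} (f : fieldT W0) w K :
  is_field f -> exists N : int, forall t, t < N -> f w K t = 0.
Proof. by case=> _ [_ h]; exact: h. Qed.

Lemma iota12_pos (g : sc1) s m (t : int) : 0 <= t -> iota12 g s m (- t - 1) = 0.
Proof. by move=> ht; rewrite /iota12 ifF //; apply/negbTE; rewrite -ltNge; lia. Qed.

Lemma field_expand {W0 : lmodType C} (I : finType) (f : fieldT W0) (bo b : fieldT W0)
  (G : I -> sc1) (p : I -> fieldT W0) :
  is_field f -> (forall k, is_field (p k)) ->
  (forall w K x, bo w K x + \sum_k PhiT (G k) (p k) w K x = b w K x) ->
  forall w K n x, f (fun k => b w k x) K n = f (fun k => bo w k x) K n +
    \sum_k \sum_(s < K.+1) zsum (fun t => iota12 (G k) s x (- t - 1) *: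
                                     f (fun k' => p k w k' t) (K - s)%N n).
Proof.
move=> hf hp hb w K n x.
have -> : (fun k => b w k x) = (fun k => bo w k x + \sum_k0 PhiT (G k0) (p k0) w k x).
  by apply: boolp.funext => k; rewrite hb.
rewrite field_add // field_sum //; congr (_ + _); apply: eq_bigr => k _.
rewrite /PhiT; apply: (@field_conv _ f (fun s t => iota12 (G k) s x (- t - 1)) (fun k' t => p k w k' t)) => //.
- by move=> s t ht; apply: iota12_pos.
- by move=> k'; apply: field_lowb.
Qed.

Lemma expandL {W0 : lmodType C} (I : finType) (G : I -> I -> sc1)
  (phi alpha : I -> fieldT W0) (f : fieldT W0) :
  (forall k, is_field (phi k)) -> is_field f ->
  (forall i w K n, phi i w K n + \sum_k PhiT (G i k) (phi k) w K n = alpha i w K n) ->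
  forall i w K m n, fcomm (alpha i) f w K m n =
    fcomm (phi i) f w K m n + \sum_k PhiL (G i k) (fcomm (phi k) f) w K m n.
Proof.
move=> hphi hf hal i w K m n.
rewrite /fcomm /fprod /fprod_rev -hal.
rewrite (@field_expand _ I f (phi i) (alpha i) (G i) phi hf hphi (hal i) w K n m).
rewrite /PhiL /PhiT.
have -> : \sum_k \sum_(s < K.+1) zsum (fun t => iota12 (G i k) s m (- t - 1) *:
    (phi k (fun k0 => f w k0 n) (K - s)%N t - f (fun k0 => phi k w k0 t) (K - s)%N n)) =
  \sum_k \sum_(s < K.+1) zsum (fun t => iota12 (G i k) s m (- t - 1) *:
    phi k (fun k0 => f w k0 n) (K - s)%N t) -
  \sum_k \sum_(s < K.+1) zsum (fun t => iota12 (G i k) s m (- t - 1) *: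
    f (fun k0 => phi k w k0 t) (K - s)%N n).
  rewrite -sumrB; apply: eq_bigr => k _; rewrite -sumrB; apply: eq_bigr => s _.
  apply: zsumB_coef.
  - by move=> t ht; apply: iota12_pos.
  - by apply: field_lowb.
  - apply: field_bound => // k'; exact: field_lowb.
rewrite /=; set a := phi i _ K m; set b := f _ K n.
by rewrite opprD addrACA.
Qed.

Lemma expandR {W0 : lmodType C} (I : finType) (G : I -> I -> sc1)
  (phi alpha : I -> fieldT W0) :
  (forall k, is_field (phi k)) ->
  (forall i w K n, phi i w K n + \sum_k PhiT (G i k) (phi k) w K n = alpha i w K n) ->
  forall i j w K m n, fcomm (phi i) (alpha j) w K m n =
    fcomm (phi i) (phi j) w K m n + \sum_k PhiR (G j k) (fcomm (phi i) (phi k)) w K m n.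
Proof.
move=> hphi hal i j w K m n.
rewrite /fcomm /fprod /fprod_rev -hal.
rewrite (@field_expand _ I (phi i) (phi j) (alpha j) (G j) phi (hphi i) hphi (hal j) w K m n).
rewrite /PhiR /PhiT.
have -> : \sum_k \sum_(s < K.+1) zsum (fun t => iota12 (G j k) s n (- t - 1) *:
    (phi i (fun k0 => phi k w k0 t) (K - s)%N m - phi k (fun k0 => phi i w k0 m) (K - s)%N t)) =
  \sum_k \sum_(s < K.+1) zsum (fun t => iota12 (G j k) s n (- t - 1) *:
    phi i (fun k0 => phi k w k0 t) (K - s)%N m) -
  \sum_k \sum_(s < K.+1) zsum (fun t => iota12 (G j k) s n (- t - 1) *:
    phi k (fun k0 => phi i w k0 m) (K - s)%N t).
  rewrite -sumrB; apply: eq_bigr => k _; rewrite -sumrB; apply: eq_bigr => s _.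
  apply: zsumB_coef.
  - by move=> t ht; apply: iota12_pos.
  - apply: field_bound => // k'; exact: field_lowb.
  - by apply: field_lowb.
by rewrite opprD addrACA.
Qed.


Lemma CL (I : finType) (A : I -> I -> int) (eta : I -> nat -> int -> I -> C) i j s m (x : int) :
  \sum_k iota12 (dz (etak eta i k)) s m x * (A k j)%:~R = iota12 (dz (etaij A eta i j)) s m x.
Proof.
rewrite /iota12; case: ifP => _; last by rewrite big1 // => k _; rewrite mul0r.
rewrite /dz /etaij /etak /pair_al mulr_sumr !mulr_suml; apply: eq_bigr => k _; ring.
Qed.

Lemma D1 (F : sc1) s m (n : int) :
  (n + 1)%:~R * iota12 F s m (n + 1) = - iota12 (dz F) s m n.
Proof.
rewrite /iota12; case: ifP => h1; case: ifP => h2.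
- have [n' hn'] : exists n' : nat, n = n'%:Z by exists `|n|%N; lia.
  subst n.
  have -> : `|(n'%:Z + 1)%R|%N = n'.+1 by lia.
  have -> : `|n'%:Z|%N = n' by lia.
  rewrite /dz.
  have -> : m + (n'%:Z + 1) = (m + n') + 1 by rewrite addrA.
  have := gbinom_rec (m + n') n'.
  have -> : (n'%:Z + 1)%:~R = (n'.+1)%:R :> C by rewrite -PoszD addn1.
  move=> h.
  rewrite exprS.
  transitivity (- (F s (m + n' + 1) * (-1) ^+ n' * ((n'.+1)%:R * gbinom (m + n' + 1) n'.+1))).
    ring.
  by rewrite h; ring.
- have -> : n + 1 = 0 by lia.
  by rewrite mul0r oppr0.
- exfalso; lia.
- by rewrite mulr0 oppr0.
Qed.

Lemma D2 (F : sc1) s (m n : int) :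
  (- m - 1)%:~R * iota12 F s n (m + 1) = iota21 (dz F) s m n.
Proof.
rewrite /iota12 /iota21; case: ifP => h1; case: ifP => h2.
- have [m' hm'] : exists m' : nat, m = m'%:Z by exists `|m|%N; lia.
  subst m.
  have -> : `|(m'%:Z + 1)%R|%N = m'.+1 by lia.
  have -> : `|m'%:Z|%N = m' by lia.
  rewrite /dz.
  have -> : n + (m'%:Z + 1) = (m'%:Z + n) + 1 by rewrite addrA (addrC n).
  have := gbinom_rec (m'%:Z + n) m'.
  have -> : (- m'%:Z - 1)%:~R = - (m'.+1)%:R :> C by rewrite -opprD -PoszD addn1 mulrNz.
  move=> h.
  rewrite exprS.
  transitivity (F s (m'%:Z + n + 1) * (-1) ^+ m' * ((m'.+1)%:R * gbinom (m'%:Z + n + 1) m'.+1)).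
    ring.
  by rewrite h; ring.
- have -> : - m - 1 = 0 by lia.
  by rewrite mul0r.
- exfalso; lia.
- by rewrite mulr0.
Qed.


Lemma PhiL_C1 {W0 : lmodType C} (g : sc1) (a : C) (H : sc2)
  (hH : forall p t n, t < 0 -> H p t n = 0) (w : hW W0) K m n :
  PhiL g (sc2id (fun p m n => a * ddelta2 p m n + H p m n)) w K m n =
  \sum_(s < K.+1) (iota12 g s m (n + 1) * (a * (n + 1)%:~R)) *: w (K - s)%N.
Proof.
rewrite /PhiL; apply: eq_bigr => s _.
rewrite (@zsum1 _ _ (- n - 2)).
- rewrite /sc2id.
  have -> : - (- n - 2) - 1 = n + 1 by lia.
  case: (ltP (n + 1) 0) => hn.
    by rewrite /iota12 ifF ?mul0r ?scale0r //; apply/negbTE; rewrite -ltNge.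
  rewrite big_ord_recl /= big1 ?addr0.
  + rewrite /ddelta2 eqxx /= hH; last by lia.
    by rewrite addr0 subn0 scalerA eqxx.
  + move=> p _; rewrite /ddelta2 /= hH; last by lia.
    by rewrite mulr0 addr0 scale0r.
- move=> t ht; case: (ltP t 0) => htn; last by rewrite iota12_pos // scale0r.
  rewrite /sc2id big1 ?scaler0 // => p _.
  by rewrite /ddelta2 (negbTE ht) andbF mulr0 hH // addr0 scale0r.
Qed.

Lemma iota21_neg (F : sc1) p (t n : int) : t < 0 -> iota21 F p t n = 0.
Proof. by move=> ht; rewrite /iota21 ifF //; apply/negbTE; rewrite -ltNge. Qed.

Lemma C1 {W0 : lmodType C} (I : finType) (A : I -> I -> int)
  (eta : I -> nat -> int -> I -> C) i j (w : hW W0) K m n :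
  sc2id (fun p m n => (A i j)%:~R * ddelta2 p m n + iota21 (dz (dz (etaij A eta j i))) p m n) w K m n
  + \sum_k PhiL (dz (etak eta i k)) (sc2id (fun p m n => (A k j)%:~R * ddelta2 p m n
                         + iota21 (dz (dz (etaij A eta j k))) p m n)) w K m n
  = sc2id (fun p m n => (A i j)%:~R * ddelta2 p m n
                         - iota12 (dz (dz (etaij A eta i j))) p m n
                         + iota21 (dz (dz (etaij A eta j i))) p m n) w K m n.
Proof.
under eq_bigr => k _ do rewrite (@PhiL_C1 _ _ _ _ (iota21_neg _)).
rewrite exchange_big /= /sc2id -big_split /=; apply: eq_bigr => s _.
rewrite -scaler_suml -scalerDl; congr (_ *: _).
have -> : \sum_k iota12 (dz (etak eta i k)) s m (n + 1) * ((A k j)%:~R * (n + 1)%:~R) =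
          (n + 1)%:~R * \sum_k iota12 (dz (etak eta i k)) s m (n + 1) * (A k j)%:~R.
  by rewrite mulr_sumr; apply: eq_bigr => k _; ring.
rewrite CL D1; ring.
Qed.

Lemma PhiR_C3 {W0 : lmodType C} (g : sc1) (a : C) (w : hW W0) K m n :
  PhiR g (sc2id (fun p m n => a * ddelta2 p m n)) w K m n =
  \sum_(s < K.+1) (iota12 g s n (m + 1) * (a * (- m - 1)%:~R)) *: w (K - s)%N.
Proof.
rewrite /PhiR; apply: eq_bigr => s _.
rewrite (@zsum1 _ _ (- m - 2)).
- rewrite /sc2id.
  have -> : - (- m - 2) - 1 = m + 1 by lia.
  rewrite big_ord_recl /= big1 ?addr0.
  + rewrite /ddelta2 eqxx /=.
    have -> : (m == - (- m - 2) - 2) = true by apply/eqP; lia.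
    have -> : (- m - 2 + 1) = - m - 1 by lia.
    by rewrite subn0 scalerA.
  + by move=> p _; rewrite /ddelta2 /= mulr0 scale0r.
- move=> t ht; rewrite /sc2id big1 ?scaler0 // => p _; rewrite /ddelta2.
  have -> : (m == - t - 2) = false by apply/negbTE; apply: contra ht => /eqP h; apply/eqP; lia.
  by rewrite andbF mulr0 scale0r.
Qed.

Lemma C3 {W0 : lmodType C} (I : finType) (A : I -> I -> int) (hsym : sym_gram A)
  (eta : I -> nat -> int -> I -> C) i j (w : hW W0) K m n :
  sc2id (fun p m n => (A i j)%:~R * ddelta2 p m n) w K m n
  + \sum_k PhiR (dz (etak eta j k)) (sc2id (fun p m n => (A i k)%:~R * ddelta2 p m n)) w K m n
  = sc2id (fun p m n => (A i j)%:~R * ddelta2 p m n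
                         + iota21 (dz (dz (etaij A eta j i))) p m n) w K m n.
Proof.
under eq_bigr => k _ do rewrite PhiR_C3.
rewrite exchange_big /= /sc2id -big_split /=; apply: eq_bigr => s _.
rewrite -scaler_suml -scalerDl; congr (_ *: _).
have -> : \sum_k iota12 (dz (etak eta j k)) s n (m + 1) * ((A i k)%:~R * (- m - 1)%:~R) =
          (- m - 1)%:~R * \sum_k iota12 (dz (etak eta j k)) s n (m + 1) * (A k i)%:~R.
  by rewrite mulr_sumr; apply: eq_bigr => k _; rewrite hsym; ring.
by rewrite CL D2.
Qed.


Lemma PhiL_C2 {W0 : lmodType C} (g : sc1) (c0 c : C) (H : sc2)
  (hH : forall p t n, t < 0 -> H p t n = 0) (e : fieldT W0) (w : hW W0) K m n :
  PhiL g (sc2f2 (fun p m n => c0 * (c * delta2 p m n + H p m n)) e) w K m n =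
  \sum_(s < K.+1) zsum (fun t => (iota12 g s m (- t - 1) * (c0 * c)) *: e w (K - s)%N (t + n + 1)).
Proof.
rewrite /PhiL; apply: eq_bigr => s _; apply: zsum_ext => t.
case: (ltP t 0) => ht; last by rewrite iota12_pos // mul0r !scale0r.
rewrite /sc2f2 big_ord_recl /= big1 ?addr0.
- rewrite (@zsum1 _ _ (t + n + 1)).
  + rewrite /delta2 /= hH // addr0.
    have -> : (t == - (n - (t + n + 1)) - 1) = true by apply/eqP; lia.
    by rewrite mulr1 subn0 scalerA.
  + move=> x hx; rewrite /delta2 /= hH // addr0.
    have -> : (t == - (n - x) - 1) = false by apply/negbTE; apply: contra hx => /eqP h; apply/eqP; lia.
    by rewrite mulr0 mulr0 scale0r.
- move=> p _; apply: zsum0 => x.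
  by rewrite /delta2 /= hH // addr0 mulr0 mulr0 scale0r.
Qed.

Lemma etaij_low (I : finType) (A : I -> I -> int) (eta : I -> nat -> int -> I -> C) :
  in_HQ eta -> forall j i s, exists L : int, forall r, r < L -> dz (etaij A eta j i) s r = 0.
Proof.
move=> heta j i s; have [h _] := heta j; have [L hL] := h s.
exists (L - 1) => r hr; rewrite /dz /etaij hL; last by lia.
by rewrite /pair_al big1 ?mulr0 // => k _; rewrite mul0r.
Qed.

Lemma C2 {W0 : lmodType C} (I : finType) (A : I -> I -> int)
  (eta : I -> nat -> int -> I -> C) (heta : in_HQ eta) (e : fieldT W0) (he : is_field e)
  (sg : C) i j (w : hW W0) K m n :
  sc2f2 (fun p m n => sg * ((A i j)%:~R * delta2 p m n
                         + iota21 (dz (etaij A eta j i)) p m n)) e w K m n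
  + \sum_k PhiL (dz (etak eta i k)) (sc2f2 (fun p m n => sg * ((A k j)%:~R * delta2 p m n
                         + iota21 (dz (etaij A eta j k)) p m n)) e) w K m n
  = sc2f2 (fun p m n => sg * ((A i j)%:~R * delta2 p m n
                         + iota12 (dz (etaij A eta i j)) p m n
                         + iota21 (dz (etaij A eta j i)) p m n)) e w K m n.
Proof.
under eq_bigr => k _ do rewrite (@PhiL_C2 _ _ _ _ _ (iota21_neg _)).
rewrite exchange_big /= /sc2f2 -big_split /=; apply: eq_bigr => s _.
have [N hN] := @field_lowb _ e w (K - s)%N he.
have [L hL] := @etaij_low I A eta heta j i s.
rewrite -(@zsum_big _ _ _ _ (N - n - 1) 0); last first.
  move=> k t [ht|ht]; last by rewrite iota12_pos // mul0r scale0r.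
  by rewrite hN ?scaler0 //; lia.
pose F x := (\sum_k iota12 (dz (etak eta i k)) s m (n - x) * (sg * (A k j)%:~R))
              *: e w (K - s)%N x.
rewrite [X in _ + X = _](@zsum_ext _ _ (fun t => F (t + (n + 1)))); last first.
  move=> t; rewrite /F scaler_suml; apply: eq_bigr => k _.
  have -> : n - (t + (n + 1)) = - t - 1 by lia.
  by rewrite addrA.
have hF : bdd F N (n + 1).
  move=> x [hx|hx]; first by rewrite /F hN ?scaler0.
  rewrite /F big1 ?scale0r // => k _.
  by rewrite /iota12 ifF ?mul0r //; apply/negbTE; rewrite -ltNge; lia.
rewrite (@zsum_shift _ F (n + 1) N (n + 1) hF).
pose M := n + `|m|%:Z + `|L|%:Z + 2.
rewrite -(@zsumD _ _ _ N M); first last.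
- by apply: bdd_widen hF => //; lia.
- move=> x [hx|hx]; first by rewrite hN ?scaler0.
  have -> : delta2 s m (n - x) = 0.
    rewrite /delta2 ifF //; apply/negbTE; rewrite negb_and; apply/orP; right.
    apply/eqP; lia.
  have -> : iota21 (dz (etaij A eta j i)) s m (n - x) = 0.
    rewrite /iota21; case: ifP => hm //; rewrite hL ?mul0r //; lia.
  by rewrite mulr0 add0r mulr0 scale0r.
apply: zsum_ext => x; rewrite /F -scalerDl; congr (_ *: _).
rewrite -CL.
have -> : \sum_k iota12 (dz (etak eta i k)) s m (n - x) * (sg * (A k j)%:~R) =
          sg * \sum_k iota12 (dz (etak eta i k)) s m (n - x) * (A k j)%:~R.
  by rewrite mulr_sumr; apply: eq_bigr => k _; ring.
ring.
Qed.


Theorem lemma5p3 (I : finType) (A : I -> I -> int)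
  (hsym : sym_gram A) (heven : gram_even A) (hnd : gram_nondeg A)
  (eta : I -> nat -> int -> I -> C) (heta : in_HQ eta)
  (W0 : lmodType C) (alpha : I -> fieldT W0) (e : bool -> I -> fieldT W0)
  (hobj : is_object A eta alpha e)
  (phi : I -> fieldT W0) (hphi_field : forall k, is_field (phi k))
  (hphi : forall i w K n,
     phi i w K n + \sum_k PhiT (dz (etak eta i k)) (phi k) w K n = alpha i w K n) :
  (forall i j, fcomm (phi i) (alpha j) =
     sc2id (fun p m n => (A i j)%:~R * ddelta2 p m n
                         + iota21 (dz (dz (etaij A eta j i))) p m n)) /\
  (forall b i j, fcomm (phi i) (e b j) =
     sc2f2 (fun p m n => sgn b * ((A i j)%:~R * delta2 p m n
                         + iota21 (dz (etaij A eta j i)) p m n)) (e b j)) /\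
  (forall i j, fcomm (phi i) (phi j) =
     sc2id (fun p m n => (A i j)%:~R * ddelta2 p m n)).
Proof.
case: hobj => ha [he [h1 [h2 _]]].
have hG : forall i k r, r < 0 -> dz (etak eta i k) 0%N r = 0.
  move=> i k r hr; have [_ [h _]] := heta i.
  by rewrite /dz /etak h ?mulr0 //; lia.
have claim1 : forall i j, fcomm (phi i) (alpha j) =
     sc2id (fun p m n => (A i j)%:~R * ddelta2 p m n
                         + iota21 (dz (dz (etaij A eta j i))) p m n).
  move=> i0 j.
  apply: (@uniqL W0 I (fun i k => dz (etak eta i k)) hG
            (fun i => fcomm (phi i) (alpha j))
            (fun i => sc2id (fun p m n => (A i j)%:~R * ddelta2 p m n
                         + iota21 (dz (dz (etaij A eta j i))) p m n))).
  move=> i w K m n.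
  rewrite -(@expandL W0 I (fun i k => dz (etak eta i k)) phi alpha (alpha j) hphi_field (ha j) hphi).
  by rewrite h1 C1.
split; first exact: claim1.
split.
- move=> b i0 j.
  apply: (@uniqL W0 I (fun i k => dz (etak eta i k)) hG
            (fun i => fcomm (phi i) (e b j))
            (fun i => sc2f2 (fun p m n => sgn b * ((A i j)%:~R * delta2 p m n
                         + iota21 (dz (etaij A eta j i)) p m n)) (e b j))).
  move=> i w K m n.
  rewrite -(@expandL W0 I (fun i k => dz (etak eta i k)) phi alpha (e b j) hphi_field (he b j) hphi).
  by rewrite h2 (@C2 W0 I A eta heta (e b j) (he b j)).
- move=> i j0.
  apply: (@uniqR W0 I (fun i k => dz (etak eta i k)) hG
            (fun j => fcomm (phi i) (phi j))
            (fun j => sc2id (fun p m n => (A i j)%:~R * ddelta2 p m n))).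
  move=> j w K m n.
  rewrite -(@expandR W0 I (fun i k => dz (etak eta i k)) phi alpha hphi_field hphi).
  by rewrite claim1 (@C3 W0 I A hsym eta).
Qed.
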